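(* Let $n=2$, $O_1=\{p\in M: v_1(p)\ge v_2(p)\}$, $O_2=\{q\in M: v_1(q)<v_2(q)\}$, and assume that in $(O_1,O_2)$ agent 2 strongly envies agent 1. Consider the following procedure LocalSearch applied to an allocation $(A_1,A_2)$ in which agent 2 does not strongly envy agent 1: while agent 1 strongly envies agent 2, pick an arbitrary item $g\in A_2\setminus O_2$ and set $A_2\leftarrow A_2\setminus\{g\}$; then, if $v_2(A_2)<v_2(A_1)$ (agent 2 envies agent 1 in the partial allocation $(A_1,A_2)$), set $(A_1,A_2)\leftarrow(A_2\cup\{g\},A_1)$, and otherwise set $(A_1,A_2)\leftarrow(A_1\cup\{g\},A_2)$. Then whenever the loop condition holds an item $g\in A_2\setminus O_2$ exists, the loop terminates after at most $m$ iterations, and the output allocation is EF1 and has social welfare at least that of the input allocation.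
   Context: Two agents with additive valuations $v_1,v_2:2^M\to\mathbb{R}_{\ge0}$ over items $M=[m]$; an allocation $(A_1,A_2)$ is a partition of $M$; social welfare is $v_1(A_1)+v_2(A_2)$. Agent $i$ envies $j$ if $v_i(A_i)<v_i(A_j)$; agent $i$ strongly envies $j$ if $A_j\ne\emptyset$ and $v_i(A_i)<v_i(A_j\setminus\{g\})$ for all $g\in A_j$. An allocation is EF1 if no agent strongly envies the other. *)

(* Defs.v *)
From HB Require Import structures.
From mathcomp Require Import all_boot all_order all_algebra.
Set Implicit Arguments. Unset Strict Implicit. Unset Printing Implicit Defensive.
Import Order.TTheory GRing.Theory Num.Theory.
Local Open Scope ring_scope.

Section Fair.
Variables (m : nat) (R : realFieldType).

Definition val (v : 'I_m -> R) (S : {set 'I_m}) : R := \sum_(i in S) v i.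

Definition alloc := ({set 'I_m} * {set 'I_m})%type.

Definition is_partition (A : alloc) : bool :=
  (A.1 :&: A.2 == set0) && (A.1 :|: A.2 == setT).

Definition envies (vi : 'I_m -> R) (Ai Aj : {set 'I_m}) : bool :=
  val vi Ai < val vi Aj.

Definition strongly_envies (vi : 'I_m -> R) (Ai Aj : {set 'I_m}) : bool :=
  (Aj != set0) && [forall g in Aj, val vi Ai < val vi (Aj :\ g)].

Definition EF1 (v1 v2 : 'I_m -> R) (A : alloc) : bool :=
  ~~ strongly_envies v1 A.1 A.2 && ~~ strongly_envies v2 A.2 A.1.

Definition SW (v1 v2 : 'I_m -> R) (A : alloc) : R := val v1 A.1 + val v2 A.2.

Definition O1 (v1 v2 : 'I_m -> R) : {set 'I_m} := [set p | v2 p <= v1 p].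
Definition O2 (v1 v2 : 'I_m -> R) : {set 'I_m} := [set q | v1 q < v2 q].

(* One iteration of the LocalSearch loop, for an arbitrary choice of
   g in A2 \ O2: the loop condition holds in A, and B is the result. *)
Definition ls_step (v1 v2 : 'I_m -> R) (A B : alloc) : bool :=
  strongly_envies v1 A.1 A.2 &&
  [exists g in A.2 :\: O2 v1 v2,
     let A2' := A.2 :\ g in
     B == (if envies v2 A2' A.1 then (g |: A2', A.1)
           else (g |: A.1, A2'))].

End Fair.

(* Main.v *)
Require Import Defs.
From HB Require Import structures.
From mathcomp Require Import all_boot all_order all_algebra.
From mathcomp Require Import lra.
Import Order.TTheory GRing.Theory Num.Theory.
Local Open Scope ring_scope.
Set Implicit Arguments. Unset Strict Implicit.

Section H.
Variables (m : nat) (R : realFieldType).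
Local Notation dval := Defs.val.
Implicit Types (v : 'I_m -> R) (A B : {set 'I_m}).

Lemma val_D1 v A g : g \in A -> dval v A = v g + dval v (A :\ g).
Proof.
move=> gA; rewrite /dval /Defs.val (bigD1 g) //=; congr (_ + _).
by apply: eq_bigl => i; rewrite !inE andbC.
Qed.

Lemma val_U1 v A g : g \notin A -> dval v (g |: A) = v g + dval v A.
Proof. by move=> gA; rewrite (@val_D1 v (g |: A) g) ?setU11 // setU1K. Qed.

Lemma val_sub v A B : (forall i, 0 <= v i) -> A \subset B -> dval v A <= dval v B.
Proof.
move=> h sAB; rewrite /dval /Defs.val (@big_setID _ _ _ _ B A) /= (setIidPr sAB) lerDl.
by apply: sumr_ge0 => i _.
Qed.

Lemma card_lt A g : g \notin A -> (#|A| < m)%N.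
Proof.
move=> gA; have : A \proper [set: 'I_m].
  by rewrite properT; apply/eqP => E; move: gA; rewrite E inE.
by move/proper_card; rewrite cardsT card_ord.
Qed.
End H.
Section Main.
Variables (m : nat) (R : realFieldType) (v1 v2 : 'I_m -> R).
Hypotheses (hv1 : forall i, 0 <= v1 i) (hv2 : forall i, 0 <= v2 i).
Local Notation dval := Defs.val.

Definition Inv (A : alloc m) := is_partition A && ~~ strongly_envies v2 A.2 A.1.

Lemma part_out (A1 A2 : {set 'I_m}) g :
  is_partition (A1, A2) -> g \in A2 -> g \notin A1.
Proof.
case/andP=> /eqP /setP H _ gA2; apply/negP => gA1.
by have := H g; rewrite !inE gA1 gA2.
Qed.

Lemma part_in (A1 A2 : {set 'I_m}) g :
  is_partition (A1, A2) -> g \notin A2 -> g \in A1.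
Proof.
case/andP=> _ /eqP /setP H gA2.
by have := H g; rewrite !inE (negbTE gA2) orbF.
Qed.

Lemma step_ok A B : Inv A -> ls_step v1 v2 A B ->
  [/\ Inv B, SW v1 v2 A <= SW v1 v2 B, (#|A.1| < m)%N &
     (#|B.1| = #|A.1|.+1 \/ ~~ strongly_envies v1 B.1 B.2)].
Proof.
case: A => A1 A2; case/andP=> hP h2 /andP [se1 /existsP [g /andP [gD /eqP ->]]] /=.
move: gD; rewrite !inE -leNgt => /andP [vg gA2].
have gA1 : g \notin A1 by apply: (part_out hP).
have cA1 : (#|A1| < m)%N by apply: (card_lt gA1).
have [_ /forallP se] := andP se1.
have hlt := se g; rewrite gA2 /= in hlt.
have e1 := val_D1 v1 gA2; have e2 := val_D1 v2 gA2.
rewrite /envies; case: ifP => hE /=.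
- rewrite setD1K //; split => //.
  + apply/andP; split.
      by move: hP; rewrite /is_partition /= setIC setUC.
    rewrite /strongly_envies negb_and; apply/orP; right.
    rewrite negb_forall; apply/existsP; exists g; rewrite gA2 /= -leNgt.
    exact: ltW.
  + rewrite /SW /=; lra.
  + right; rewrite /strongly_envies negb_and.
    case: (set0Pn A1) => [[h hA1]|_] //=.
    rewrite negb_forall; apply/existsP; exists h; rewrite hA1 /= -leNgt.
    have := val_sub hv1 (subD1set A1 h).
    have := val_sub hv1 (subD1set A2 g).
    lra.
- move/negbT: hE; rewrite -leNgt => hE.
  split.
  + apply/andP; split.
      case/andP: hP => /eqP /setP H1 /eqP /setP H2.
      apply/andP; split; apply/eqP/setP => x; have := H1 x; have := H2 x;
      rewrite !inE; case: eqVneq => [->|]; rewrite ?gA2 ?(negbTE gA1) //=.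
    rewrite /strongly_envies negb_and; apply/orP; right.
    rewrite negb_forall; apply/existsP; exists g; rewrite setU11 /= setU1K //.
    by rewrite -leNgt.
  + rewrite /SW /= val_U1 //; lra.
  + done.
  + by left; rewrite cardsU1 gA1.
Qed.
End Main.
Section Main2.
Variables (m : nat) (R : realFieldType) (v1 v2 : 'I_m -> R).
Hypotheses (hv1 : forall i, 0 <= v1 i) (hv2 : forall i, 0 <= v2 i).
Hypothesis (hO : strongly_envies v2 (O2 v1 v2) (O1 v1 v2)).
Local Notation dval := Defs.val.

Lemma ex_g (A : alloc m) : Inv v2 A -> exists g, g \in A.2 :\: O2 v1 v2.
Proof.
case: A => A1 A2 /andP [hP h2] /=.
case: (set0Pn (A2 :\: O2 v1 v2)) => // hne.
have : ~~ (A2 :\: O2 v1 v2 != set0) by apply/set0Pn.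
rewrite negbK setD_eq0 => sub.
exfalso.
have sO1 : O1 v1 v2 \subset A1.
  apply/subsetP => x; rewrite !inE leNgt => hx; apply: (part_in hP).
  by apply/negP => /(subsetP sub); rewrite inE (negbTE hx).
case/andP: hO => /set0Pn [g0 g0O] /forallP hall.
have A1n : A1 != set0 by apply/set0Pn; exists g0; exact: (subsetP sO1).
move: h2; rewrite /strongly_envies /= A1n /= negb_forall => /existsP [g].
rewrite negb_imply -leNgt => /andP [gA1 hle].
have l2 := val_sub hv2 sub.
case gO: (g \in O1 v1 v2).
- have := hall g; rewrite gO /= => hl.
  have : O1 v1 v2 :\ g \subset A1 :\ g by apply: setSD.
  move/(val_sub hv2); lra.
- have := hall g0; rewrite g0O /= => hl.
  have : O1 v1 v2 :\ g0 \subset A1 :\ g.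
    apply/subsetP => x; rewrite in_setD1 => /andP [_ xO].
    rewrite in_setD1 (subsetP sO1) // andbT.
    by apply/eqP => ex; rewrite -ex xO in gO.
  move/(val_sub hv2); lra.
Qed.

Lemma run_ok s (A : alloc m) : Inv v2 A -> path (ls_step v1 v2) A s ->
  [/\ (size s + #|A.1| <= m)%N, Inv v2 (last A s) & SW v1 v2 A <= SW v1 v2 (last A s)].
Proof.
elim: s A => [|B s IH] A hA /=.
  by move=> _; split => //; rewrite add0n; apply: leq_trans (max_card _) _; rewrite card_ord.
case/andP => st hp.
have [iB swB cA hB] := step_ok hv1 hA st.
have [c1 i1 s1] := IH B iB hp.
split => //; last exact: le_trans s1.
case: hB => [e|ns].
  by move: c1; rewrite e addnS -addSn.
case: s hp {IH c1 i1 s1} => [|C s] /=.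
  by move=> _; rewrite add1n.
by case/andP => /andP [se _]; rewrite se in ns.
Qed.
End Main2.

Unset Implicit Arguments.
Theorem lemma2 (m : nat) (R : realFieldType) (v1 v2 : 'I_m -> R)
  (hv1 : forall i, 0 <= v1 i) (hv2 : forall i, 0 <= v2 i)
  (hO : strongly_envies v2 (O2 v1 v2) (O1 v1 v2))
  (A0 : alloc m) (hA0 : is_partition A0)
  (h21 : ~~ strongly_envies v2 A0.2 A0.1)
  (s : seq (alloc m)) (hs : path (ls_step v1 v2) A0 s) :
  let A := last A0 s in
  [/\ (size s <= m)%N,
      (strongly_envies v1 A.1 A.2 -> exists g, g \in A.2 :\: O2 v1 v2)
    & (~~ strongly_envies v1 A.1 A.2 ->
         EF1 v1 v2 A /\ SW v1 v2 A0 <= SW v1 v2 A)].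
Proof.
have iA0 : Inv v2 A0 by rewrite /Inv hA0.
have [c i sw] := run_ok hv1 iA0 hs.
split.
- exact: leq_trans (leq_addr _ _) c.
- by move=> _; apply: (ex_g hv2 hO).
- move=> ne; split => //; rewrite /EF1 ne /=.
  by case/andP: i.
Qed.
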